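(* Let $(\mathcal{P},\mathcal{L})$ be a $(6,4)$ net, and let $\mathcal{C}$ be its binary code, i.e. the $\mathbb{F}_2$-subspace of $\mathbb{F}_2^{\mathcal{P}}$ spanned by the characteristic functions $v^{\lambda}$ of the lines $\lambda\in\mathcal{L}$. Then $\dim_{\mathbb{F}_2}\mathcal{C}\le 20$.
   Context: An $(n,k)$ net is a pair $(\mathcal{P},\mathcal{L})$ where $\mathcal{P}$ is a set of $n^2$ points and $\mathcal{L}$ is a collection of $n$-element subsets of $\mathcal{P}$ (lines) such that: (1) $\mathcal{L}$ is the disjoint union of $k$ parallel classes, each of which is a partition of $\mathcal{P}$ into $n$ lines; (2) two lines from different parallel classes meet in exactly one point. $\mathbb{F}_2^{\mathcal{P}}$ denotes the $\mathbb{F}_2$-vector space of functions $\mathcal{P}\to\mathbb{F}_2$, and for $X\subseteq\mathcal{P}$, $v^X$ is the characteristic function of $X$. *)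

(* Defs.v *)
From HB Require Import structures.
From mathcomp Require Import all_boot all_order all_algebra.
Set Implicit Arguments. Unset Strict Implicit. Unset Printing Implicit Defensive.
Import GRing.Theory.

(* L is the disjoint union of k parallel classes cls i (i : 'I_k), each a
   partition of P into n lines; lines are n-element subsets; lines from
   different parallel classes meet in exactly one point; #|P| = n^2. *)
Definition is_net (n k : nat) (P : finType) (L : {set {set P}}) : Prop :=
  #|P| = (n ^ 2)%N /\
  (forall l, l \in L -> #|l| = n) /\
  exists cls : 'I_k -> {set {set P}},
    [/\ (forall i, partition (cls i) [set: P]),
        (forall i, #|cls i| = n),
        (forall i j, i != j -> [disjoint cls i & cls j]),
        L = \bigcup_(i < k) cls i
      & (forall i j, i != j -> forall l m, l \in cls i -> m \in cls j ->
            #|l :&: m| = 1%N)].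

Notation F2fun P := {ffun P -> ('F_2)^o}%type.

Local Open Scope ring_scope.
Definition charfun (P : finType) (X : {set P}) : F2fun P :=
  [ffun x => if x \in X then 1 else 0].

Definition binary_code (P : finType) (L : {set {set P}}) : {vspace F2fun P} :=
  <<[seq charfun l | l <- enum L]>>%VS.

(* Main.v *)
Require Import Defs.
From HB Require Import structures.
From mathcomp Require Import all_boot all_order all_algebra.
Set Implicit Arguments. Unset Strict Implicit. Unset Printing Implicit Defensive.
Import GRing.Theory.
Local Open Scope ring_scope.

Lemma F2_6 : (6%:R : 'F_2) = 0.
Proof. by rewrite -(@Fp_nat_mod 2 (isT : prime 2) 6). Qed.
Lemma F2_11 : (1 + 1 : 'F_2) = 0.
Proof. change (2%:R = 0 :> 'F_2); by rewrite -(@Fp_nat_mod 2 (isT : prime 2) 2). Qed.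

Section Orth.
Variable P : finType.
Lemma sum_ev (R : zmodType) (F : P -> R) :
  \sum_p F p = \sum_(j < #|P|) F (enum_val j).
Proof. by rewrite -big_enum_val; apply: eq_bigl. Qed.

Definition bf (x y : F2fun P) : 'F_2 := \sum_p (x p : 'F_2) * y p.

Lemma bf_sumZl n (c : 'I_n -> 'F_2) (X : 'I_n -> F2fun P) y :
  bf (\sum_i c i *: X i) y = \sum_i c i * bf (X i) y.
Proof.
rewrite /bf; under eq_bigr do rewrite sum_ffunE mulr_suml.
rewrite exchange_big /=; apply: eq_bigr => i _; rewrite mulr_sumr.
by apply: eq_bigr => p _; rewrite ffunE mulrA.
Qed.

Lemma bfC x y : bf x y = bf y x.
Proof. by apply: eq_bigr => p _; rewrite mulrC. Qed.

Lemma bf_span (X Y : seq (F2fun P)) :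
  (forall x y, x \in X -> y \in Y -> bf x y = 0) ->
  forall u w, u \in <<X>>%VS -> w \in <<Y>>%VS -> bf u w = 0.
Proof.
move=> H u w Hu Hw.
have Hu' : u \in span (in_tuple X) by [].
have Hw' : w \in span (in_tuple Y) by [].
rewrite (coord_span Hu') bf_sumZl big1 // => i _.
rewrite bfC (coord_span Hw') bf_sumZl big1 ?mulr0 // => k _.
by rewrite bfC H ?mulr0 // mem_nth.
Qed.

Definition rowof (x : F2fun P) : 'rV['F_2]_#|P| := \row_j (x (enum_val j) : 'F_2).

Lemma orth_dim (U W : {vspace F2fun P}) :
  (forall u w, u \in U -> w \in W -> bf u w = 0) -> (\dim U + \dim W <= #|P|)%N.
Proof.
move=> H.
pose MU := \matrix_(i < \dim U, j < #|P|) (((vbasis U)`_i (enum_val j)) : 'F_2).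
pose MW := \matrix_(i < \dim W, j < #|P|) (((vbasis W)`_i (enum_val j)) : 'F_2).
have free_gen (V : {vspace F2fun P}) :
   row_free (\matrix_(i < \dim V, j < #|P|) (((vbasis V)`_i (enum_val j)) : 'F_2)).
  rewrite -kermx_eq0; apply/rowV0P => v /sub_kermxP v0.
  have Hs : \sum_i v 0 i *: (vbasis V)`_i = 0.
    apply/ffunP => p; rewrite sum_ffunE [RHS]ffunE.
    have := congr1 (fun M : 'rV_#|P| => M 0 (enum_rank p)) v0.
    rewrite !mxE => E; rewrite -[RHS]E; apply: eq_bigr => i _.
    by rewrite ffunE mxE enum_rankK.
  have /freeP := basis_free (vbasisP V).
  move=> /(_ _ Hs) v0'; apply/rowP => i; rewrite mxE; exact: v0'.
have rU : \rank MU = \dim U by apply/eqP; exact: free_gen.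
have rW : \rank MW = \dim W by apply/eqP; exact: free_gen.
have M0 : MU *m MW^T = 0.
  apply/matrixP => i k; rewrite !mxE.
  have E : bf (vbasis U)`_i (vbasis W)`_k = 0.
    by apply: H; apply: vbasis_mem; apply: mem_nth; rewrite size_tuple.
  rewrite -[RHS]E /bf sum_ev.
  by apply: eq_bigr => j _; rewrite !mxE.
have := mxrank_mul_min MU MW^T.
by rewrite M0 mxrank0 mxrank_tr rU rW leqn0 subn_eq0.
Qed.
Lemma bf_addl x x' y : bf (x + x') y = bf x y + bf x' y.
Proof. by rewrite /bf -big_split; apply: eq_bigr => p _; rewrite ffunE mulrDl. Qed.

Lemma bf_char (l m : {set P}) : bf (charfun l) (charfun m) = #|l :&: m|%:R.
Proof.
rewrite /bf (eq_bigr (fun p => if p \in l :&: m then 1 else 0)).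
  by rewrite -big_mkcond /= sumr_const.
by move=> p _; rewrite !ffunE inE; case: (p \in l); case: (p \in m); rewrite /= ?mulr1 ?mulr0 ?mul0r.
Qed.
End Orth.

From mathcomp Require Import zify.

Theorem mainTheorem1 (P : finType) (L : {set {set P}}) :
  is_net 6 4 L -> (\dim (binary_code L) <= 20)%N.
Proof.
move=> [HP [Hcard [cls [Hpart Hcls Hdisj HL Hmeet]]]].
have inL i l : l \in cls i -> l \in L.
  by move=> hl; rewrite HL; apply/bigcupP; exists i.
have gval i j l m : l \in cls i -> m \in cls j ->
    bf (charfun l) (charfun m) = (i != j)%:R.
  move=> hl hm; rewrite bf_char; case: (eqVneq i j) => [eij|nij].
    subst j; case: (eqVneq l m) => [elm|nlm].
      by subst m; rewrite setIid Hcard ?eqxx ?F2_6 //; apply: (inL i).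
    have := Hpart i => /and3P [_ triv _].
    by rewrite (disjoint_setI0 ((trivIsetP triv) l m hl hm nlm)) cards0.
  by rewrite (Hmeet i j nij l m hl hm).
have clsL l : l \in L -> exists i, l \in cls i.
  by rewrite HL => /bigcupP [i _ hi]; exists i.
pose S := [set x : {set P} * {set P} | [exists i, (x.1 \in cls i) && (x.2 \in cls i)]].
pose D := <<[seq (charfun x.1 + charfun x.2)%R | x <- enum S]>>%VS.
have Horth : forall u w, u \in D -> w \in binary_code L -> bf u w = 0.
  apply: bf_span => x y /mapP [[l1 l2] + ->] /mapP [m hm ->].
  rewrite mem_enum inE /= => /existsP [i /andP [h1 h2]].
  rewrite mem_enum in hm; have [j hj] := clsL m hm.
  rewrite bf_addl (gval i j _ _ h1 hj) (gval i j _ _ h2 hj).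
  by case: (i != j); rewrite ?F2_11 ?addr0.
have HDC := orth_dim Horth.
pose r i := odflt set0 [pick l in cls i].
have Hr i : r i \in cls i.
  rewrite /r; case: pickP => [l -> //|H0].
  by have := Hcls i; rewrite (eq_card0 H0).
pose R := <<[seq charfun (r i) | i <- enum 'I_4]>>%VS.
have HR : (\dim R <= 4)%N.
  by have := dim_span [seq charfun (r i) | i <- enum 'I_4]; rewrite size_map size_enum_ord.
have HCsub : (binary_code L <= D + R)%VS.
  apply/span_subvP => y /mapP [l hl ->]; rewrite mem_enum in hl.
  have [i hi] := clsL l hl.
  rewrite -(addrK (charfun (r i)) (charfun l)).
  apply: memv_add.
    apply: memv_span; apply/mapP; exists (l, r i) => //.
    by rewrite mem_enum inE; apply/existsP; exists i; rewrite /= hi Hr.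
  rewrite memvN; apply: memv_span; apply/mapP; exists i => //.
  by rewrite mem_enum.
have H1 := dimvS HCsub.
have H2 := dimv_add_leqif D R.
have H2' : (\dim (D + R) <= \dim D + \dim R)%N by case: H2.
have H36 : #|P| = 36%N by rewrite HP.
rewrite H36 in HDC; move: HDC H1 H2' HR; move: (\dim D) (\dim R) (\dim (D + R)) (\dim (binary_code L)) => a b c d; lia.
Qed.
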